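(* Every matching of $X_{2k}$ of size $k\ge 4$ contains two separated pairs that have no edge in common.
   Context: Let $k\ge 1$ and let $X_{2k}=\{P_1,\dots,P_{2k}\}$ be $2k$ points in convex position in the plane, labeled in clockwise cyclic order; indices are taken modulo $2k$. A matching of $X_{2k}$ means a set of $k$ pairwise non-crossing straight segments (edges) with endpoints in $X_{2k}$ covering every point exactly once; its size is $k$. A block of a matching $M$ is a pair of edges $\{P_iP_{i+3},P_{i+1}P_{i+2}\}\subseteq M$; an antiblock is a pair of edges $\{P_iP_{i+1},P_{i+2}P_{i+3}\}\subseteq M$; a separated pair is a block or an antiblock. *)

(* Defs.v *)
From mathcomp Require Import all_boot.
Set Implicit Arguments. Unset Strict Implicit. Unset Printing Implicit Defensive.

(* Points P_1..P_{2k} in convex position, clockwise, are modelled by the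
   ordinals 'I_n (n = 2k) in cyclic order.  Index arithmetic is mod n. *)

(* cyc i j = the point with index i + j (mod n). The default of insubd is
   never used since (i + j) %% n < n whenever 'I_n is inhabited. *)
Definition cyc n (i : 'I_n) (j : nat) : 'I_n := insubd i ((i + j) %% n).

Definition edge n (a b : 'I_n) : {set 'I_n} := [set a; b].

(* Two segments with endpoints in convex position cross iff their endpoints
   strictly interleave in the cyclic order. *)
Definition crossing n (e f : {set 'I_n}) : Prop :=
  exists a b c d : 'I_n,
    e = edge a b /\ f = edge c d /\ (a < c)%N /\ (c < b)%N /\ (b < d)%N.

Definition is_matching n (M : {set {set 'I_n}}) : Prop :=
  [/\ (forall e, e \in M -> #|e| = 2),
      (forall x : 'I_n, exists! e, e \in M /\ x \in e)
    & (forall e f, e \in M -> f \in M -> ~ crossing e f)].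

Definition is_block n (M : {set {set 'I_n}}) (S : {set {set 'I_n}}) : Prop :=
  exists i : 'I_n,
    S = [set edge i (cyc i 3); edge (cyc i 1) (cyc i 2)] /\ S \subset M.

Definition is_antiblock n (M : {set {set 'I_n}}) (S : {set {set 'I_n}}) : Prop :=
  exists i : 'I_n,
    S = [set edge i (cyc i 1); edge (cyc i 2) (cyc i 3)] /\ S \subset M.

Definition is_separated_pair n (M S : {set {set 'I_n}}) : Prop :=
  is_block M S \/ is_antiblock M S.

(* Main.v *)
Require Import Defs.
From mathcomp Require Import all_boot zify.
Set Implicit Arguments. Unset Strict Implicit.

Section Core.
Variables (n : nat) (p : nat -> nat).
Hypothesis Hlt : forall i, i < n -> p i < n.
Hypothesis Hne : forall i, i < n -> p i <> i.
Hypothesis Hinv : forall i, i < n -> p (p i) = i.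
Hypothesis Hnc : forall a c b d, a < c -> c < b -> b < d -> d < n ->
  p a = b -> p c = d -> False.

Definition closed x y := forall c, x <= c -> c < y -> x <= p c /\ p c < y.
Definition sepl i := (p i = i.+3 /\ p i.+1 = i.+2) \/ (p i = i.+1 /\ p i.+2 = i.+3).
Definition sepc i := (p i = i.+3 %% n /\ p (i.+1 %% n) = i.+2 %% n) \/
                     (p i = i.+1 %% n /\ p (i.+2 %% n) = i.+3 %% n).
Definition far i j := i + 4 <= j /\ j + 4 <= i + n.

Lemma modw x : n <= x -> x < n + n -> x %% n = x - n.
Proof. move=> h1 h2. rewrite -{1}(subnK h1) modnDr modn_small //; lia. Qed.

Lemma closed_first x y : y <= n -> x < y -> closed x y -> x < p x /\ p x < y.
Proof.
move=> yn xy C. have [h1 h2] := C x (leqnn x) xy.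
have hn : x < n by lia. have := Hne hn. lia.
Qed.

Lemma closed_one x : x < n -> closed x x.+1 -> False.
Proof. move=> hx C. have [h1 h2] := C x (leqnn x) (ltnSn x). have := Hne hx. lia. Qed.

Lemma split1 x y : y <= n -> x < y -> closed x y -> closed x.+1 (p x).
Proof.
move=> yn xy C c h1 h2.
have [xz zy] := closed_first yn xy C.
have [a b] := C c (ltnW h1) (ltn_trans h2 zy).
have cn : c < n by lia. have xn : x < n by lia.
have e1 : p c <> x.
  { move=> e. have := Hinv cn. rewrite e. lia. }
have e2 : p c <> p x.
  { move=> e. have := Hinv cn. rewrite e Hinv //. lia. }
have e3 : ~ (p x < p c).
  { move=> h. exact: (Hnc h1 h2 h (Hlt cn) erefl erefl). }
lia.
Qed.

Lemma split2 x y : y <= n -> x < y -> closed x y -> closed (p x).+1 y.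
Proof.
move=> yn xy C c h1 h2.
have [xz zy] := closed_first yn xy C.
have C1 := split1 yn xy C.
have [a b] := C c (ltnW (leq_ltn_trans (ltnW xz) h1)) h2.
have cn : c < n by lia. have xn : x < n by lia.
have e1 : p c <> x.
  { move=> e. have := Hinv cn. rewrite e. lia. }
have e2 : p c <> p x.
  { move=> e. have := Hinv cn. rewrite e Hinv //. lia. }
have e3 : ~ (x < p c < p x).
  { move=> /andP [u v]. have [u' v'] := C1 (p c) u v. rewrite Hinv // in u' v'. lia. }
lia.
Qed.

Lemma closed_left x y : y <= n -> x < y -> closed x y -> closed x (p x).+1.
Proof.
move=> yn xy C c h1 h2.
have [xz zy] := closed_first yn xy C.
have xn : x < n by lia.
have [e|ne] := eqVneq c x. { subst c. split; lia. }
have [e|ne'] := eqVneq c (p x). { subst c. rewrite Hinv //; lia. }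
have [u v] := split1 yn xy C (c:=c) ltac:(lia) ltac:(lia). lia.
Qed.

Lemma linear m : forall x y, y - x <= m -> x + 3 <= y -> y <= n -> closed x y ->
  exists i, [/\ x <= i, i.+3 < y & sepl i].
Proof.
elim: m => [|m IH] x y hm h3 hy C; first lia.
have xy : x < y by lia.
have [xz zy] := closed_first hy xy C.
have C1 := split1 hy xy C.
have C2 := split2 hy xy C.
have xn : x < n by lia.
have [ez|nez] := eqVneq (p x) (y - 1).
- rewrite ez in C1.
  have [h5|h5] := leqP (x + 5) y.
  + have [i [? ? ?]] := IH x.+1 (y - 1) ltac:(lia) ltac:(lia) ltac:(lia) C1.
    exists i; split => //; lia.
  + have [e3|e4] : y = x + 3 \/ y = x + 4 by lia.
    * exfalso; apply: (closed_one (x:=x.+1)); first lia.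
      by have <- : y - 1 = x.+2 by lia.
    * have [a b] := C1 x.+1 (leqnn _) ltac:(lia).
      have := Hne (i:=x.+1) ltac:(lia) => hne.
      exists x; split => //; first lia. left; split; lia.
- have [h2|h2] := leqP (x + 2) (p x).
  + have [i [? ? ?]] := IH x (p x).+1 ltac:(lia) ltac:(lia) ltac:(lia)
      (closed_left hy xy C).
    exists i; split => //; lia.
  + have ex : p x = x.+1 by lia. rewrite ex in C2.
    have [h5|h5] := leqP (x + 5) y.
    * have [i [? ? ?]] := IH x.+2 y ltac:(lia) ltac:(lia) ltac:(lia) C2.
      exists i; split => //; lia.
    * have [e3|e4] : y = x + 3 \/ y = x + 4 by lia.
      -- exfalso; apply: (closed_one (x:=x.+2)); first lia.
         by have <- : y = x.+3 by lia.
      -- have [a b] := C2 x.+2 (leqnn _) ltac:(lia).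
         have := Hne (i:=x.+2) ltac:(lia) => hne.
         exists x; split => //; first lia. right; split; lia.
Qed.

Lemma lin x y : x + 3 <= y -> y <= n -> closed x y ->
  exists i, [/\ x <= i, i.+3 < y & sepc i].
Proof.
move=> h1 h2 C. have [i [a b c]] := linear (leqnn (y - x)) h1 h2 C.
exists i; split => //. rewrite /sepc !modn_small; try lia. rewrite /sepl in c. lia.
Qed.


Lemma core : 8 <= n -> exists i j, [/\ i < n, j < n, sepc i, sepc j & far i j].
Proof.
move=> h8.
have C0 : closed 0 n by move=> c _ hc; split; [done|apply: Hlt].
have hn0 : 0 < n by lia.
have [x0 z0] := closed_first (leqnn n) hn0 C0.
have mn : n %% n = 0 by apply: modnn.
have m1 : n.+1 %% n = 1 by rewrite modw; lia.
have m2 : n.+2 %% n = 2 by rewrite modw; lia.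
have ms : forall x, x < n -> x %% n = x by move=> x hx; rewrite modn_small.
have [e1|ne1] := eqVneq (p 0) (n - 1).
- have C1 := split1 (leqnn n) hn0 C0. rewrite e1 in C1.
  have q0 : p (n - 1) = 0 by rewrite -e1 Hinv.
  have [y1 y2] := closed_first (x:=1) (y:=n-1) ltac:(lia) ltac:(lia) C1.
  have [e2|ne2] := eqVneq (p 1) (n - 2).
  + have C2 := split1 (x:=1) (y:=n-1) ltac:(lia) ltac:(lia) C1. rewrite e2 in C2.
    have [j [j1 j2 j3]] := lin (x:=2) (y:=n-2) ltac:(lia) ltac:(lia) C2.
    have q1 : p (n - 2) = 1 by rewrite -e2 Hinv; lia.
    exists j, (n - 2); split => //; try lia.
    left. have -> : (n - 2).+3 = n.+1 by lia. have -> : (n - 2).+2 = n by lia.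
    have -> : (n - 2).+1 = n - 1 by lia. rewrite m1 mn ms; lia.
    rewrite /far; lia.
  + have C2 := split2 (x:=1) (y:=n-1) ltac:(lia) ltac:(lia) C1.
    have CL := closed_left (x:=1) (y:=n-1) ltac:(lia) ltac:(lia) C1.
    have [e3|ne3] := eqVneq (p 1) 2.
    * rewrite e3 in C2.
      have [j [j1 j2 j3]] := lin (x:=3) (y:=n-1) ltac:(lia) ltac:(lia) C2.
      exists j, (n - 1); split => //; try lia.
      right. have -> : (n - 1).+3 = n.+2 by lia. have -> : (n - 1).+2 = n.+1 by lia.
      have -> : (n - 1).+1 = n by lia. rewrite m1 m2 mn; lia.
      rewrite /far; lia.
    * have [e4|ne4] := eqVneq (p 1) (n - 3).
      -- exfalso. rewrite e4 in C2. apply: (closed_one (x:=n-2)); first lia.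
         have -> : (n - 2).+1 = n - 1 by lia. have -> : n - 2 = (n - 3).+1 by lia. done.
      -- have [e5|ne5] := eqVneq (p 1) (n - 4).
         ++ rewrite e5 in C2 CL.
            have [u v] := closed_first (x:=n-3) (y:=n-1) ltac:(lia) ltac:(lia)
               ltac:(by have -> : n - 3 = (n - 4).+1 by lia).
            have hne := Hne (i:=n-3) ltac:(lia).
            have [j [j1 j2 j3]] := lin (x:=1) (y:=n-3) ltac:(lia) ltac:(lia)
               ltac:(by have -> : n - 3 = (n - 4).+1 by lia).
            exists j, (n - 3); split => //; try lia.
            right. have -> : (n - 3).+3 = n by lia. have -> : (n - 3).+2 = n - 1 by lia.
            have -> : (n - 3).+1 = n - 2 by lia. rewrite mn !ms; lia.
            rewrite /far; lia.
         ++ have [i [i1 i2 i3]] := lin (x:=1) (y:=(p 1).+1) ltac:(lia) ltac:(lia) CL.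
            have [j [j1 j2 j3]] := lin (x:=(p 1).+1) (y:=n-1) ltac:(lia) ltac:(lia) C2.
            exists i, j; split => //; try lia. rewrite /far; lia.
- have C2 := split2 (leqnn n) hn0 C0.
  have CL := closed_left (leqnn n) hn0 C0.
  have C1 := split1 (leqnn n) hn0 C0.
  have [e3|ne3] := eqVneq (p 0) 1.
  + rewrite e3 in C2.
    have [a b] := closed_first (x:=2) (y:=n) (leqnn n) ltac:(lia) C2.
    have [e4|ne4] := eqVneq (p 2) (n - 1).
    * have C3 := split1 (x:=2) (y:=n) (leqnn n) ltac:(lia) C2. rewrite e4 in C3.
      have [j [j1 j2 j3]] := lin (x:=3) (y:=n-1) ltac:(lia) ltac:(lia) C3.
      have q : p (n - 1) = 2 by rewrite -e4 Hinv; lia.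
      exists j, (n - 1); split => //; try lia.
      left. have -> : (n - 1).+3 = n.+2 by lia. have -> : (n - 1).+2 = n.+1 by lia.
      have -> : (n - 1).+1 = n by lia. rewrite m1 m2 mn; lia.
      rewrite /far; lia.
    * have C4 := split2 (x:=2) (y:=n) (leqnn n) ltac:(lia) C2.
      have C5 := closed_left (x:=2) (y:=n) (leqnn n) ltac:(lia) C2.
      have [e5|ne5] := eqVneq (p 2) 3.
      -- rewrite e5 in C4.
         have [j [j1 j2 j3]] := lin (x:=4) (y:=n) ltac:(lia) ltac:(lia) C4.
         exists 0, j; split => //; try lia.
         right. rewrite !ms; lia.
         rewrite /far; lia.
      -- have [e6|ne6] := eqVneq (p 2) (n - 2).
         ++ exfalso. rewrite e6 in C4. apply: (closed_one (x:=n-1)); first lia.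
            have -> : (n - 1).+1 = n by lia. have -> : n - 1 = (n - 2).+1 by lia. done.
         ++ have [e7|ne7] := eqVneq (p 2) (n - 3).
            ** rewrite e7 in C4 C5.
               have [u v] := closed_first (x:=n-2) (y:=n) ltac:(lia) ltac:(lia)
                  ltac:(by have -> : n - 2 = (n - 3).+1 by lia).
               have hne := Hne (i:=n-2) ltac:(lia).
               have [j [j1 j2 j3]] := lin (x:=2) (y:=n-2) ltac:(lia) ltac:(lia)
                  ltac:(by have -> : n - 2 = (n - 3).+1 by lia).
               exists j, (n - 2); split => //; try lia.
               right. have -> : (n - 2).+3 = n.+1 by lia. have -> : (n - 2).+2 = n by lia.
               have -> : (n - 2).+1 = n - 1 by lia. rewrite m1 mn !ms; lia.
               rewrite /far; lia.
            ** have [i [i1 i2 i3]] := lin (x:=2) (y:=(p 2).+1) ltac:(lia) ltac:(lia) C5.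
               have [j [j1 j2 j3]] := lin (x:=(p 2).+1) (y:=n) ltac:(lia) ltac:(lia) C4.
               exists i, j; split => //; try lia. rewrite /far; lia.
  + have [e6|ne6] := eqVneq (p 0) (n - 2).
    * exfalso. rewrite e6 in C2. apply: (closed_one (x:=n-1)); first lia.
      have -> : (n - 1).+1 = n by lia. have -> : n - 1 = (n - 2).+1 by lia. done.
    * have [e7|ne7] := eqVneq (p 0) (n - 3).
      -- rewrite e7 in C2 C1.
         have [u v] := closed_first (x:=n-2) (y:=n) ltac:(lia) ltac:(lia)
            ltac:(by have -> : n - 2 = (n - 3).+1 by lia).
         have hne := Hne (i:=n-2) ltac:(lia).
         have q : p (n - 3) = 0 by rewrite -e7 Hinv.
         have [j [j1 j2 j3]] := lin (x:=1) (y:=n-3) ltac:(lia) ltac:(lia) C1.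
         exists j, (n - 3); split => //; try lia.
         left. have -> : (n - 3).+3 = n by lia. have -> : (n - 3).+2 = n - 1 by lia.
         have -> : (n - 3).+1 = n - 2 by lia. rewrite mn !ms; lia.
         rewrite /far; lia.
      -- have [i [i1 i2 i3]] := lin (x:=0) (y:=(p 0).+1) ltac:(lia) ltac:(lia) CL.
         have [j [j1 j2 j3]] := lin (x:=(p 0).+1) (y:=n) ltac:(lia) ltac:(lia) C2.
         exists i, j; split => //; try lia. rewrite /far; lia.
Qed.

End Core.

Section Conv.
Variables (n : nat) (M : {set {set 'I_n}}).
Hypothesis HM : is_matching M.
Hypothesis h8 : 8 <= n.

Definition pO (x : 'I_n) : 'I_n := odflt x [pick y | [set x; y] \in M].

Lemma pO_in x : [set x; pO x] \in M.
Proof.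
case: HM => Hc Hu _.
have [e [[eM xe] _]] := Hu x.
have : #|e| == 2 by rewrite Hc.
move/cards2P => [a [b [ab ee]]].
have [y yM] : exists y, [set x; y] \in M.
  move: xe; rewrite ee => /set2P [->|->]; first by exists b; rewrite -ee.
  by exists a; rewrite setUC -ee.
rewrite /pO; case: pickP => [z //|H]. by rewrite H in yM.
Qed.

Lemma pO_ne x : pO x != x.
Proof.
apply/eqP => e. case: HM => Hc _ _. have := Hc _ (pO_in x). rewrite e setUid cards1. done.
Qed.

Lemma pO_inv x : pO (pO x) = x.
Proof.
case: HM => Hc Hu _.
have [e [_ U]] := Hu (pO x).
have E1 := U _ (conj (pO_in x) (set22 _ _)).
have E2 := U _ (conj (pO_in (pO x)) (set21 _ _)).
have : pO (pO x) \in [set x; pO x] by rewrite -E1 E2 set22.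
move/set2P => [//|h]. by have := pO_ne (pO x); rewrite h eqxx.
Qed.

Definition pn (i : nat) : nat := if insub i is Some o then val (pO o) else 0.

Lemma pn_val (o : 'I_n) : pn (val o) = val (pO o).
Proof. by rewrite /pn valK. Qed.

Lemma core_M : exists i j, [/\ i < n, j < n, sepc n pn i, sepc n pn j & far n i j].
Proof.
apply: core => //.
- by move=> i hi; rewrite (pn_val (Ordinal hi)); exact: ltn_ord.
- move=> i hi; rewrite (pn_val (Ordinal hi)) => e.
  have := pO_ne (Ordinal hi). by rewrite -val_eqE /= e eqxx.
- move=> i hi. rewrite (pn_val (Ordinal hi)) (pn_val (pO (Ordinal hi))) pO_inv //.
- move=> a c b d ac cb bd dn.
  have an : a < n by lia. have cn : c < n by lia. have bn : b < n by lia.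
  rewrite (pn_val (Ordinal an)) (pn_val (Ordinal cn)) => e1 e2.
  case: HM => _ _ Hnc.
  apply: (Hnc _ _ (pO_in (Ordinal an)) (pO_in (Ordinal cn))).
  exists (Ordinal an), (pO (Ordinal an)), (Ordinal cn), (pO (Ordinal cn)).
  split => //=; rewrite ?e1 ?e2 //.
Qed.

Lemma edge_in (u v : 'I_n) : pn (val u) = val v -> edge u v \in M.
Proof. rewrite pn_val => e. have -> : v = pO u by apply: val_inj. exact: pO_in. Qed.

Lemma cyc_val (I : 'I_n) j : val (cyc I j) = (val I + j) %% n.
Proof. rewrite /cyc insubdK //. rewrite unfold_in ltn_pmod //; lia. Qed.

Definition win (I : 'I_n) (x : 'I_n) := exists a, a < 4 /\ val x = (val I + a) %% n.

Lemma win_cyc I a : a < 4 -> win I (cyc I a).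
Proof. by move=> h; exists a; split => //; rewrite cyc_val. Qed.

Lemma win_I I : win I I.
Proof. exists 0; split => //; rewrite addn0 modn_small //; exact: ltn_ord. Qed.

Lemma sep_set i : i < n -> sepc n pn i -> exists (I : 'I_n) S,
  [/\ val I = i, is_separated_pair M S & forall e x, e \in S -> x \in e -> win I x].
Proof.
move=> hi hs. exists (Ordinal hi).
have hw : forall a b c d, win (Ordinal hi) a -> win (Ordinal hi) b ->
   win (Ordinal hi) c -> win (Ordinal hi) d ->
   forall e x, e \in [set edge a b; edge c d] -> x \in e -> win (Ordinal hi) x.
  move=> a b c d wa wb wc wd e x /set2P [->|->] /set2P [->|->] //.
case: hs => [[e1 e2]|[e1 e2]].
- exists [set edge (Ordinal hi) (cyc (Ordinal hi) 3); edge (cyc (Ordinal hi) 1) (cyc (Ordinal hi) 2)].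
  split => //; last by apply: hw; [exact: win_I | exact: win_cyc | exact: win_cyc | exact: win_cyc].
  left; exists (Ordinal hi); split => //.
  apply/subsetP => e /set2P [->|->]; apply: edge_in; rewrite !cyc_val /= ?addn1 ?addn2 ?addn3 //.
- exists [set edge (Ordinal hi) (cyc (Ordinal hi) 1); edge (cyc (Ordinal hi) 2) (cyc (Ordinal hi) 3)].
  split => //; last by apply: hw; [exact: win_I | exact: win_cyc | exact: win_cyc | exact: win_cyc].
  right; exists (Ordinal hi); split => //.
  apply/subsetP => e /set2P [->|->]; apply: edge_in; rewrite !cyc_val /= ?addn1 ?addn2 ?addn3 //.
Qed.

Lemma md x : x < n + n -> x %% n = if x < n then x else x - n.
Proof.
move=> h2. case: (ltnP x n) => h1; first by rewrite modn_small.
exact: modw.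
Qed.

Lemma far_win i j (I J : 'I_n) x : val I = i -> val J = j -> far n i j ->
  win I x -> win J x -> False.
Proof.
move=> <- <- [f1 f2] [a [a4 ea]] [b [b4 eb]]. move: f1 f2; rewrite /= => f1 f2.
have hI := ltn_ord I. have hJ := ltn_ord J.
have ha : I + a < n + n by lia. have hb : J + b < n + n by lia.
rewrite ea (md ha) (md hb) in eb.
move: eb; case: ifP => q1; case: ifP => q2; rewrite /= in f1 f2; lia.
Qed.

Lemma final : exists S1 S2 : {set {set 'I_n}},
    [/\ is_separated_pair M S1, is_separated_pair M S2 & S1 :&: S2 = set0].
Proof.
have [i [j [hi hj si sj f]]] := core_M.
have [I [S1 [vI P1 W1]]] := sep_set hi si.
have [J [S2 [vJ P2 W2]]] := sep_set hj sj.
exists S1, S2; split => //.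
apply/setP => e; rewrite inE in_set0.
apply/negP => /andP [e1 e2].
case: P1 => [[I' [E _]]|[I' [E _]]]; move: e1 (e1); rewrite {1}E => /set2P [ee|ee] e1; rewrite ee in e1 e2;
  exact: (far_win vI vJ f (W1 _ _ e1 (set21 _ _)) (W2 _ _ e2 (set21 _ _))).
Qed.

End Conv.

Theorem mainTheorem6 (k : nat) (hk : (4 <= k)%N) (M : {set {set 'I_(k.*2)}}) :
  is_matching M ->
  exists S1 S2 : {set {set 'I_(k.*2)}},
    [/\ is_separated_pair M S1, is_separated_pair M S2 & S1 :&: S2 = set0].
Proof.
move=> HM. apply: final => //. rewrite -addnn. lia.
Qed.
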